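(* Let $\sigma$ be a permutation of $\{1,\ldots,n\}$ with $\sigma(i)\neq i$ for all $i$. Then there exists a partition $U_1,U_2,U_3$ of $\{1,\ldots,n\}$ such that for each $j\in\{1,2,3\}$, $|U_j|\in[\frac{n}{4}-1,\frac{n}{2}+1]$ and $U_j\cap\sigma(U_j)=\emptyset$. *)

(* Defs.v *)
From mathcomp Require Import all_boot all_order all_algebra all_fingroup.
Set Implicit Arguments. Unset Strict Implicit. Unset Printing Implicit Defensive.

(* Main.v *)
Require Import Defs.
From mathcomp Require Import all_boot all_order all_algebra all_fingroup.
From mathcomp Require Import zify lra.
Import GRing.Theory Num.Theory.

Section Aux.
Variable T : finType.
Variable s : {perm T}.
Hypothesis hs : forall x, s x != x.

Definition indep (A : {set T}) := [forall x in A, s x \notin A].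

Lemma indepP (A : {set T}) : reflect (forall x, x \in A -> s x \notin A) (indep A).
Proof.
apply: (iffP forallP) => H x; first by move=> xA; move/implyP: (H x); apply.
by apply/implyP; apply: H.
Qed.

Lemma indepE (A : {set T}) : indep A -> A :&: (s @: A) = set0.
Proof.
move/indepP=> iA; apply/setP => x; rewrite !inE.
apply/negbTE/negP => /andP [xA /imsetP [y yA e]].
by move: (iA y yA); rewrite -e xA.
Qed.

Lemma subset_size (S : {set T}) k : (k <= #|S|)%N -> exists S1 : {set T}, S1 \subset S /\ #|S1| = k.
Proof.
elim: k => [|k IH] hk; first by exists set0; rewrite sub0set cards0.
have [S1 [sub c]] := IH (ltnW hk).
have : S1 \proper S by rewrite properEcard sub c hk.
case/properP => _ [x xS xS1].
exists (x |: S1); split; first by rewrite subUset sub1set xS sub.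
by rewrite cardsU1 xS1 c.
Qed.

Lemma disjP (X Y : {set T}) : (forall x, x \in X -> x \in Y -> False) -> [disjoint X & Y].
Proof.
move=> H; rewrite -setI_eq0; apply/eqP/setP => x; rewrite !inE.
by apply/negbTE/andP => [[]]; exact: H.
Qed.

Lemma nbr (A : {set T}) : maxset indep A -> forall x, x \notin A -> (s x \in A) || ((s^-1)%g x \in A).
Proof.
case/maxsetP => /indepP iA mx x xA; apply/negPn/negP => /norP [h1 h2].
have iB : indep (x |: A).
  apply/indepP => y; rewrite !in_setU1 => /orP [/eqP-> | yA].
    by rewrite negb_or hs.
  rewrite negb_or (iA y yA) andbT; apply/eqP => e.
  by move: h2; rewrite -e permK yA.
have := mx _ iB (subsetUr _ _).
by move/setP/(_ x); rewrite setU11 (negbTE xA).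
Qed.

Lemma main_nat : exists A B C : {set T},
  [/\ A :|: B :|: C = [set: T],
      [disjoint A & B], [disjoint A & C], [disjoint B & C] &
      forall X, X \in [:: A; B; C] ->
        [/\ (#|T| <= 4 * #|X| + 4)%N, (2 * #|X| <= #|T| + 2)%N & indep X]].
Proof.
have i0 : indep set0 by apply/indepP => x; rewrite inE.
have [A mA _] := maxset_exists (P := indep) (C := set0) i0.
have nb := @nbr A mA.
have /indepP iA : indep A by case/maxsetP: mA.
have no3 : forall x, x \notin A -> s x \notin A -> s (s x) \in A.
  move=> x h1 h2; have := nb _ h2; by rewrite permK (negbTE h1) orbF.
pose P := [set x | (x \notin A) && (s x \notin A)].
have memP : forall x, (x \in P) = (x \notin A) && (s x \notin A) by move=> x; rewrite inE.
clearbody P.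
pose Q := s @: P.
have memQ : forall x, (x \in Q) = ((s^-1)%g x \in P).
  move=> x; apply/imsetP/idP => [[y yP ->]| h]; first by rewrite permK.
  by exists ((s^-1)%g x); rewrite ?permKV.
have cQ : #|Q| = #|P| by rewrite card_imset //; apply: perm_inj.
clearbody Q.
pose S := [set x | (x \notin A) && (x \notin P) && (x \notin Q)].
have memS : forall x, (x \in S) = (x \notin A) && (x \notin P) && (x \notin Q) by move=> x; rewrite inE.
clearbody S.
have hh : (#|S|./2 <= #|S|)%N by have := odd_double_half #|S|; rewrite -addnn; lia.
have [S1 [S1S cS1]] := @subset_size S _ hh.
pose S2 := S :\: S1.
have cS2 : #|S2| = (#|S| - #|S|./2)%N.
  by rewrite cardsD (setIidPr S1S) cS1.
have memS2 : forall x, (x \in S2) = (x \in S) && (x \notin S1).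
  by move=> x; rewrite inE andbC.
clearbody S2.
have cUd : forall X Y : {set T}, (forall x, x \in X -> x \in Y -> False) ->
    #|X :|: Y| = (#|X| + #|Y|)%N.
  move=> X Y H; rewrite -cardsUI.
  have -> : X :&: Y = set0.
    by apply/setP => x; rewrite !inE; apply/negbTE/andP => [[]]; exact: H.
  by rewrite cards0 addn0.
have PN : forall x, x \in P -> x \notin A by move=> x; rewrite memP => /andP [].
have QN : forall x, x \in Q -> x \notin A.
  by move=> x; rewrite memQ memP permKV => /andP [].
have PQ : forall x, x \in P -> x \in Q -> False.
  move=> x xP; rewrite memQ memP => /andP [h1 h2].
  have := no3 _ h1 h2; rewrite permKV => h3.
  by move: xP; rewrite memP h3 andbF.
have SN : forall x, x \in S -> x \notin A by move=> x; rewrite memS => /andP [/andP []].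
have S1N : forall x, x \in S1 -> x \notin A by move=> x /(subsetP S1S); apply: SN.
have S2N : forall x, x \in S2 -> x \notin A by move=> x; rewrite memS2 => /andP [/SN].
have e3 : ~: A = P :|: Q :|: S.
  apply/setP => x; rewrite !inE memS.
  case xP: (x \in P); first by rewrite (PN x xP).
  case xQ: (x \in Q); first by rewrite (QN x xQ).
  by rewrite /= !andbT.
have cN : #|~: A| = (2 * #|P| + #|S|)%N.
  rewrite e3 cUd; last first.
    move=> x; rewrite inE memS => /orP [->|->]; by rewrite !andbF.
  rewrite cUd //; lia.
have cNA : (#|~: A| <= 2 * #|A|)%N.
  have sub : ~: A \subset ((s^-1)%g @: A) :|: (s @: A).
    apply/subsetP => x; rewrite inE => xA; rewrite inE.
    case/orP: (nb x xA) => h; apply/orP.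
      by left; apply/imsetP; exists (s x) => //; rewrite permK.
    by right; apply/imsetP; exists ((s^-1)%g x) => //; rewrite permKV.
  have := subset_leq_card sub; have := cardsUI ((s^-1)%g @: A) (s @: A).
  have := leq_imset_card (s^-1)%g A; have := leq_imset_card s A; lia.
have cA : (2 * #|A| <= #|T|)%N.
  have iA' : indep A by apply/indepP.
  have := cardsUI A (s @: A); rewrite (indepE A iA') cards0 card_imset; last exact: perm_inj.
  have := max_card (A :|: s @: A); lia.
have cAT := cardsC A.
exists A, (P :|: S1), (Q :|: S2); split.
- apply/setP => x; rewrite !inE.
  case xA: (x \in A) => //=.
  have : x \in ~: A by rewrite inE xA.
  rewrite e3 !inE => /orP [/orP [->|->]|xS]; rewrite ?orbT //.
  by rewrite memS2 xS; case: (x \in S1); rewrite ?orbT.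
- apply: disjP => x xA; rewrite inE => /orP [/PN|/S1N]; by rewrite xA.
- apply: disjP => x xA; rewrite inE => /orP [/QN|/S2N]; by rewrite xA.
- apply: disjP => x; rewrite !inE => /orP [xP|xS1] /orP [xQ|xS2].
  + exact: PQ xP xQ.
  + by move: xS2; rewrite memS2 memS xP !andbF.
  + by move: (subsetP S1S _ xS1); rewrite memS xQ andbF.
  + by move: xS2; rewrite memS2 xS1 andbF.
have nth := odd_double_half #|S|; rewrite -addnn in nth.
have o1 := leq_b1 (odd #|S|).
move=> X; rewrite !inE => /or3P [/eqP->|/eqP->|/eqP->].
- split; [lia | lia | exact/indepP].
- rewrite cUd; last by move=> x xP /(subsetP S1S); rewrite memS xP andbF.
  split; [lia | lia | ].
  apply/indepP => x xB; apply/negP => sxB.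
  have BN : forall y, y \in P :|: S1 -> y \notin A by move=> y; rewrite inE => /orP [/PN|/S1N].
  have xP : x \in P by rewrite memP (BN x xB) (BN _ sxB).
  have sxQ : s x \in Q by rewrite memQ permK.
  move: sxB; rewrite inE => /orP [h|h]; first exact: PQ h sxQ.
  by move: (subsetP S1S _ h); rewrite memS sxQ !andbF.
- rewrite cUd; last by move=> x xQ; rewrite memS2 memS xQ !andbF.
  split; [lia | lia | ].
  apply/indepP => x xC; apply/negP => sxC.
  have CN : forall y, y \in Q :|: S2 -> y \notin A by move=> y; rewrite inE => /orP [/QN|/S2N].
  have xP : x \in P by rewrite memP (CN x xC) (CN _ sxC).
  move: xC; rewrite inE => /orP [h|h]; first exact: PQ xP h.
  by move: h; rewrite memS2 memS xP !andbF.
Qed.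

End Aux.

Local Open Scope ring_scope.

Theorem lemma5 (n : nat) (s : {perm 'I_n}) (hs : forall i : 'I_n, s i != i) :
  exists U1 U2 U3 : {set 'I_n},
    [/\ U1 :|: U2 :|: U3 = [set: 'I_n],
        [disjoint U1 & U2], [disjoint U1 & U3], [disjoint U2 & U3] &
        forall U, U \in [:: U1; U2; U3] ->
          [/\ (n%:Q / 4 - 1 <= (#|U|)%:Q), ((#|U|)%:Q <= n%:Q / 2 + 1) &
              U :&: (s @: U) = set0]].
Proof.
have [A [B [C [h1 h2 h3 h4 h5]]]] := @main_nat _ s hs.
exists A, B, C; split => // U /h5 [c1 c2 c3]; split; last exact: indepE.
- move: c1; rewrite card_ord -(ler_nat rat) natrD natrM => c1; lra.
- move: c2; rewrite card_ord -(ler_nat rat) natrD natrM => c2; lra.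
Qed.
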